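(* Let $\mathcal P$ be a 2-reflex orthostack made of three bricks with canonical contact rectangles, whose signature is neither of the form $\sqcap_i\sqcap_4$ nor of the form $\sqcup_4\sqcup_i$ ($i\in\{1,2,3,4\}$). Then $\mathcal P$ is guarded by one closed face guard that is neither the topmost nor the bottommost horizontal face of $\mathcal P$.
   Context: A 2-reflex orthostack is an orthogonal polyhedron with no reflex edge parallel to the vertical ($z$) axis all of whose horizontal cross-sections are simply connected; it is a stack of bricks $B_t=R_t\times[z_{t-1},z_t]$, $t=1,\dots,k$ (bottom to top), $z_0<\dots<z_k$, each $R_t$ an axis-parallel rectangle, $R_t\ne R_{t+1}$. The contact rectangle between $B_t$ and $B_{t+1}$ is $(R_t\cap R_{t+1})\times\{z_t\}$; it is canonical if one of $R_t,R_{t+1}$ is strictly contained in the other and their set difference is connected. The type of a canonical contact rectangle is the number $i\in\{1,2,3,4\}$ of sides of the smaller rectangle not contained in the boundary of the larger one. The contact is denoted $\sqcup_i$ if $R_t\subsetneq R_{t+1}$ and $\sqcap_i$ if $R_{t+1}\subsetneq R_t$. The signature is the sequence of these symbols for $t=1,\dots,k-1$, read bottom to top. A point $x$ is visible to $y$ if segment $xy$ does not meet the exterior of the polyhedron; a closed face guard is a face including its boundary; it guards the polyhedron if every point is visible from some point of it. *)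

(* Defs.v *)
From Stdlib Require Import Reals.
Open Scope R_scope.

Definition open_in {T : Type} (d : T -> T -> R) (U : T -> Prop) : Prop :=
  forall x, U x -> exists e, 0 < e /\ forall y, d x y < e -> U y.

Definition connected {T : Type} (d : T -> T -> R) (S : T -> Prop) : Prop :=
  ~ (exists U V : T -> Prop,
        open_in d U /\ open_in d V /\
        (forall x, S x -> U x \/ V x) /\
        (forall x, S x -> U x -> V x -> False) /\
        (exists x, S x /\ U x) /\ (exists x, S x /\ V x)).

Definition closure {T : Type} (d : T -> T -> R) (S : T -> Prop) (y : T) : Prop :=
  forall e, 0 < e -> exists z, S z /\ d y z < e.

Definition boundary {T : Type} (d : T -> T -> R) (S : T -> Prop) (x : T) : Prop :=
  (forall e, 0 < e -> exists y, d x y < e /\ S y) /\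
  (forall e, 0 < e -> exists y, d x y < e /\ ~ S y).

Definition component {T : Type} (d : T -> T -> R) (S : T -> Prop) (x0 y : T) : Prop :=
  S x0 /\ exists D : T -> Prop,
    (forall z, D z -> S z) /\ D x0 /\ D y /\ connected d D.

Definition pt2 := (R * R)%type.
Definition dist2 (a b : pt2) : R :=
  sqrt ((fst a - fst b)^2 + (snd a - snd b)^2).

(* closed axis-parallel rectangle [x1,x2] x [y1,y2] *)
Record rect := Rect { rx1 : R; rx2 : R; ry1 : R; ry2 : R }.
Definition valid_rect (Q : rect) : Prop := rx1 Q < rx2 Q /\ ry1 Q < ry2 Q.

Definition in_rect (Q : rect) (p : pt2) : Prop :=
  rx1 Q <= fst p <= rx2 Q /\ ry1 Q <= snd p <= ry2 Q.

Definition subset2 (A B : pt2 -> Prop) : Prop := forall p, A p -> B p.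

Definition strict_sub (A B : rect) : Prop :=
  subset2 (in_rect A) (in_rect B) /\ ~ subset2 (in_rect B) (in_rect A).

Definition rect_diff (B A : rect) (p : pt2) : Prop := in_rect B p /\ ~ in_rect A p.

Definition side (Q : rect) (k : nat) (p : pt2) : Prop :=
  match k with
  | 0%nat => fst p = rx1 Q /\ ry1 Q <= snd p <= ry2 Q
  | 1%nat => fst p = rx2 Q /\ ry1 Q <= snd p <= ry2 Q
  | 2%nat => snd p = ry1 Q /\ rx1 Q <= fst p <= rx2 Q
  | _     => snd p = ry2 Q /\ rx1 Q <= fst p <= rx2 Q
  end.

Definition rect_bd (Q : rect) (p : pt2) : Prop :=
  side Q 0 p \/ side Q 1 p \/ side Q 2 p \/ side Q 3 p.

(* contact between consecutive rectangles Rt (below) and Rt1 (above) is canonical *)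
Definition canonical (Rt Rt1 : rect) : Prop :=
  (strict_sub Rt Rt1 /\ connected dist2 (rect_diff Rt1 Rt)) \/
  (strict_sub Rt1 Rt /\ connected dist2 (rect_diff Rt Rt1)).

(* type of a canonical contact: i = number of sides of the smaller rectangle
   not contained in the boundary of the larger one *)
Definition b2n (b : bool) : nat := if b then 1%nat else 0%nat.
Definition contact_type (small big : rect) (i : nat) : Prop :=
  exists f : nat -> bool,
    (forall k, (k < 4)%nat -> (f k = true <-> ~ subset2 (side small k) (rect_bd big))) /\
    i = (b2n (f 0%nat) + b2n (f 1%nat) + b2n (f 2%nat) + b2n (f 3%nat))%nat.

Definition is_cup (Rt Rt1 : rect) (i : nat) : Prop :=
  strict_sub Rt Rt1 /\ contact_type Rt Rt1 i.
Definition is_cap (Rt Rt1 : rect) (i : nat) : Prop :=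
  strict_sub Rt1 Rt /\ contact_type Rt1 Rt i.

Record pt3 := P3 { px : R; py : R; pz : R }.
Definition dist3 (a b : pt3) : R :=
  sqrt ((px a - px b)^2 + (py a - py b)^2 + (pz a - pz b)^2).

Definition brick (Q : rect) (zlo zhi : R) (p : pt3) : Prop :=
  in_rect Q (px p, py p) /\ zlo <= pz p <= zhi.

Definition stack3 (R1 R2 R3 : rect) (z0 z1 z2 z3 : R) (p : pt3) : Prop :=
  brick R1 z0 z1 p \/ brick R2 z1 z2 p \/ brick R3 z2 z3 p.

Definition in_plane (n : pt3) (c : R) (p : pt3) : Prop :=
  px n * px p + py n * py p + pz n * pz p = c.

Definition flat_pt (P : pt3 -> Prop) (n : pt3) (c : R) (x : pt3) : Prop :=
  boundary dist3 P x /\ in_plane n c x /\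
  exists e, 0 < e /\ forall y, dist3 x y < e ->
    (boundary dist3 P y <-> in_plane n c y).

Definition closed_face (P : pt3 -> Prop) (F : pt3 -> Prop) : Prop :=
  exists (n : pt3) (c : R) (x0 : pt3),
    n <> P3 0 0 0 /\ flat_pt P n c x0 /\
    forall y, F y <-> closure dist3 (component dist3 (flat_pt P n c) x0) y.

Definition visible (P : pt3 -> Prop) (x y : pt3) : Prop :=
  forall s, 0 <= s <= 1 ->
    P (P3 (px x + s * (px y - px x)) (py x + s * (py y - py x)) (pz x + s * (pz y - pz x))).

Definition guards (P : pt3 -> Prop) (F : pt3 -> Prop) : Prop :=
  forall p, P p -> exists q, F q /\ visible P p q.

Definition same_set (A B : pt3 -> Prop) : Prop := forall p, A p <-> B p.

Definition hface (Q : rect) (z : R) (p : pt3) : Prop :=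
  in_rect Q (px p, py p) /\ pz p = z.

(* Main.v *)
Require Import Defs.
From Stdlib Require Import Reals Lra Psatz Classical ClassicalEpsilon.
Open Scope R_scope.

Definition lerp (x y : pt3) (s : R) : pt3 :=
  P3 (px x + s * (px y - px x)) (py x + s * (py y - py x)) (pz x + s * (pz y - pz x)).

Definition dot (n p : pt3) : R := px n * px p + py n * py p + pz n * pz p.

Lemma sqr_nonneg3 a b c : 0 <= a^2 + b^2 + c^2.
Proof. nra. Qed.

Lemma dist3_nonneg x y : 0 <= dist3 x y.
Proof. unfold dist3; apply sqrt_pos. Qed.

Lemma dist3_refl x : dist3 x x = 0.
Proof.
  unfold dist3. replace ((px x - px x) ^ 2 + (py x - py x) ^ 2 + (pz x - pz x) ^ 2) with 0 by ring.
  apply sqrt_0.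
Qed.

Lemma dist3_sym x y : dist3 x y = dist3 y x.
Proof.
  unfold dist3. f_equal. ring.
Qed.

Lemma abs_le_sqrt w S : w^2 <= S -> Rabs w <= sqrt S.
Proof.
  intro H. rewrite <- (sqrt_pow2 (Rabs w)) by apply Rabs_pos.
  apply sqrt_le_1_alt. rewrite pow2_abs. exact H.
Qed.

Lemma dist_lerp x y s t :
  dist3 (lerp x y s) (lerp x y t) = Rabs (s - t) * dist3 x y.
Proof.
  unfold dist3, lerp; cbn [px py pz].
  replace ((px x + s * (px y - px x) - (px x + t * (px y - px x))) ^ 2 +
   (py x + s * (py y - py x) - (py x + t * (py y - py x))) ^ 2 +
   (pz x + s * (pz y - pz x) - (pz x + t * (pz y - pz x))) ^ 2)
  with ((Rabs (s - t))^2 * ((px x - px y) ^ 2 + (py x - py y) ^ 2 + (pz x - pz y) ^ 2)).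
  2:{ rewrite pow2_abs. ring. }
  rewrite sqrt_mult.
  - rewrite sqrt_pow2 by apply Rabs_pos. reflexivity.
  - apply pow2_ge_0.
  - apply sqr_nonneg3.
Qed.

Lemma lerp0 x y : lerp x y 0 = x.
Proof. destruct x; unfold lerp; simpl; f_equal; ring. Qed.
Lemma lerp1 x y : lerp x y 1 = y.
Proof. destruct x, y; unfold lerp; simpl; f_equal; ring. Qed.

Lemma cs3 a b c u v w :
  (a*u + b*v + c*w)^2 <= (a^2+b^2+c^2) * (u^2+v^2+w^2).
Proof.
  pose proof (pow2_ge_0 (a*v - b*u)); pose proof (pow2_ge_0 (a*w - c*u)); pose proof (pow2_ge_0 (b*w - c*v)).
  nra.
Qed.

Lemma dot_bound n y z :
  px n ^2 + py n ^2 + pz n ^2 = 1 ->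
  dot n y - dist3 y z <= dot n z <= dot n y + dist3 y z.
Proof.
  intro Hn.
  assert (H : Rabs (dot n z - dot n y) <= dist3 y z).
  { unfold dist3. apply abs_le_sqrt. unfold dot.
    pose proof (cs3 (px n) (py n) (pz n) (px z - px y) (py z - py y) (pz z - pz y)) as C.
    rewrite Hn in C.
    replace ((px y - px z) ^ 2 + (py y - py z) ^ 2 + (pz y - pz z) ^ 2)
      with ((px z - px y) ^ 2 + (py z - py y) ^ 2 + (pz z - pz y) ^ 2) by ring.
    replace (px n * px z + py n * py z + pz n * pz z - (px n * px y + py n * py y + pz n * pz y))
      with (px n * (px z - px y) + py n * (py z - py y) + pz n * (pz z - pz y)) by ring.
    lra. }
  revert H; unfold Rabs; destruct Rcase_abs; intro; lra.
Qed.

Lemma coord_bound d y e : dist3 d y < e ->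
  px d - e < px y < px d + e /\ py d - e < py y < py d + e /\ pz d - e < pz y < pz d + e.
Proof.
  intro H.
  pose proof (dot_bound (P3 1 0 0) d y ltac:(simpl; ring)) as H1.
  pose proof (dot_bound (P3 0 1 0) d y ltac:(simpl; ring)) as H2.
  pose proof (dot_bound (P3 0 0 1) d y ltac:(simpl; ring)) as H3.
  unfold dot in *; simpl in *. lra.
Qed.

Lemma dist3_triangle a b c : dist3 a c <= dist3 a b + dist3 b c.
Proof.
  unfold dist3.
  set (u1 := px a - px b). set (u2 := py a - py b). set (u3 := pz a - pz b).
  set (v1 := px b - px c). set (v2 := py b - py c). set (v3 := pz b - pz c).
  replace ((px a - px c) ^ 2 + (py a - py c) ^ 2 + (pz a - pz c) ^ 2)
    with ((u1+v1)^2 + (u2+v2)^2 + (u3+v3)^2) by (unfold u1,u2,u3,v1,v2,v3; ring).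
  set (A := u1^2+u2^2+u3^2). set (B := v1^2+v2^2+v3^2).
  assert (HA : 0 <= A) by apply sqr_nonneg3.
  assert (HB : 0 <= B) by apply sqr_nonneg3.
  pose proof (sqrt_pos A) as sa. pose proof (sqrt_pos B) as sb.
  pose proof (sqrt_sqrt A HA) as eA. pose proof (sqrt_sqrt B HB) as eB.
  pose proof (cs3 u1 u2 u3 v1 v2 v3) as C. fold A B in C.
  assert (Hd : u1*v1+u2*v2+u3*v3 <= sqrt A * sqrt B).
  { assert (E: (sqrt A * sqrt B)^2 = A * B).
    { replace ((sqrt A * sqrt B)^2) with ((sqrt A * sqrt A) * (sqrt B * sqrt B)) by ring. rewrite eA, eB. reflexivity. }
    set (w := u1*v1+u2*v2+u3*v3) in *. set (p := sqrt A * sqrt B) in *.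
    assert (0 <= p) by (unfold p; nra).
    destruct (Rle_dec w p) as [h|h]; [exact h|]. exfalso.
    assert (p < w) by lra. assert (p*p < w*w) by nra. nra. }
  rewrite <- (sqrt_pow2 (sqrt A + sqrt B)) by lra.
  apply sqrt_le_1_alt.
  replace ((sqrt A + sqrt B)^2) with (sqrt A * sqrt A + sqrt B * sqrt B + 2 * (sqrt A * sqrt B)) by ring.
  rewrite eA, eB.
  assert (X: (u1+v1)^2 + (u2+v2)^2 + (u3+v3)^2 = A + B + 2*(u1*v1+u2*v2+u3*v3)) by (unfold A, B; ring).
  lra.
Qed.

Definition convex (D : pt3 -> Prop) : Prop :=
  forall x y s, D x -> D y -> 0 <= s <= 1 -> D (lerp x y s).

Lemma convex_connected D : convex D -> connected dist3 D.
Proof.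
  intros HD [U [V [HU [HV [Hcov [Hdis [[x [Dx Ux]] [y [Dy Vy]]]]]]]]].
  set (f := lerp x y).
  set (E := fun s => 0 <= s <= 1 /\ forall t, 0 <= t <= s -> U (f t)).
  assert (E0 : E 0).
  { split; [lra|]. intros t Ht. replace t with 0 by lra. unfold f; rewrite lerp0; exact Ux. }
  assert (Eb : bound E). { exists 1. intros s [Hs _]; lra. }
  destruct (completeness E Eb (ex_intro _ 0 E0)) as [m [Hub Hlub]].
  assert (Hm0 : 0 <= m) by (apply Hub; exact E0).
  assert (Hm1 : m <= 1). { apply Hlub. intros s [Hs _]; lra. }
  assert (Happ : forall d, 0 < d -> exists s, E s /\ m - d < s <= m).
  { intros d Hd. apply NNPP. intro Hn.
    assert (Hu : is_upper_bound E (m - d)).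
    { intros s Es. destruct (Rle_dec s (m - d)) as [h|h]; [exact h|].
      exfalso. apply Hn. exists s. split; [exact Es|]. split; [lra| apply Hub; exact Es]. }
    apply Hlub in Hu. lra. }
  set (L := dist3 x y + 1).
  assert (HL : 0 < L) by (unfold L; pose proof (dist3_nonneg x y); lra).
  assert (Hclose : forall s t e, 0 < e -> Rabs (s - t) < e / L -> dist3 (f s) (f t) < e).
  { intros s t e He Hst. unfold f. rewrite dist_lerp.
    pose proof (dist3_nonneg x y) as H0.
    pose proof (Rabs_pos (s - t)).
    assert (e / L * L = e) by (field; lra).
    assert (Rabs (s - t) * dist3 x y <= e / L * dist3 x y) by (apply Rmult_le_compat_r; lra).
    assert (e / L * dist3 x y < e / L * L).
    { apply Rmult_lt_compat_l. apply Rdiv_lt_0_compat; lra. unfold L; lra. }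
    lra. }
  assert (Dm : D (f m)) by (apply HD; auto).
  destruct (Hcov _ Dm) as [Um | Vm].
  - destruct (HU _ Um) as [e [He Hb]].
    assert (Hd : 0 < e / L) by (apply Rdiv_lt_0_compat; lra).
    destruct (Req_dec m 1) as [E1|N1].
    + apply (Hdis y Dy); [|exact Vy]. replace y with (f m) by (unfold f; rewrite E1; apply lerp1).
      exact Um.
    + destruct (Happ _ Hd) as [s [[Hs Es] Hs2]].
      set (m' := Rmin 1 (m + e / L / 2)).
      assert (Em' : E m').
      { split. unfold m'; unfold Rmin; destruct Rle_dec; lra.
        intros t Ht. destruct (Rle_dec t s) as [h|h].
        - apply Es; lra.
        - apply Hb. apply Hclose; [exact He|].
          assert (t <= m + e / L / 2) by (unfold m' in Ht; unfold Rmin in Ht; destruct Rle_dec; lra).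
          apply Rabs_def1; lra. }
      apply Hub in Em'. unfold m' in Em'; unfold Rmin in Em'; destruct Rle_dec; lra.
  - destruct (HV _ Vm) as [e [He Hb]].
    assert (Hd : 0 < e / L) by (apply Rdiv_lt_0_compat; lra).
    destruct (Happ _ Hd) as [s [[Hs Es] Hs2]].
    assert (Us : U (f s)) by (apply Es; lra).
    assert (Vs : V (f s)) by (apply Hb; apply Hclose; [exact He| apply Rabs_def1; lra]).
    apply (Hdis (f s)); auto. apply HD; auto.
Qed.
Definition sh (y n : pt3) (s : R) : pt3 :=
  P3 (px y - s * px n) (py y - s * py n) (pz y - s * pz n).

Lemma dist_sh y n s : px n ^2 + py n ^2 + pz n ^2 = 1 -> dist3 y (sh y n s) = Rabs s.
Proof.
  intro Hn. unfold dist3, sh; cbn [px py pz].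
  replace ((px y - (px y - s * px n)) ^ 2 + (py y - (py y - s * py n)) ^ 2 +
   (pz y - (pz y - s * pz n)) ^ 2) with ((Rabs s)^2 * (px n ^2 + py n ^2 + pz n ^2))
   by (rewrite pow2_abs; ring).
  rewrite Hn, Rmult_1_r. apply sqrt_pow2, Rabs_pos.
Qed.

Lemma dot_sh y n s : px n ^2 + py n ^2 + pz n ^2 = 1 -> dot n (sh y n s) = dot n y - s.
Proof. intro Hn. unfold dot, sh; cbn [px py pz].
  replace s with (s * (px n ^2 + py n ^2 + pz n ^2)) at 4 by (rewrite Hn; ring). ring. Qed.

Lemma halfspace_flat P n c d e0 :
  px n ^2 + py n ^2 + pz n ^2 = 1 -> 0 < e0 -> in_plane n c d ->
  (forall y, dist3 d y < e0 -> (P y <-> dot n y >= c)) -> flat_pt P n c d.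
Proof.
  intros Hn He Hd Hloc.
  assert (Hbd : forall y, dist3 d y < e0 / 2 -> in_plane n c y -> boundary dist3 P y).
  { intros y Hy Hp. unfold in_plane in Hp. split.
    - intros e Hee. exists y. rewrite dist3_refl. split; [lra|].
      apply Hloc. lra. unfold dot; lra.
    - intros e Hee. set (s := Rmin e (e0/2) / 2).
      assert (Hs : 0 < s /\ s < e /\ s < e0 / 2) by (unfold s, Rmin; destruct Rle_dec; lra).
      exists (sh y n s). rewrite dist_sh by exact Hn. rewrite Rabs_pos_eq by lra.
      split; [lra|]. intro HP.
      assert (Hd2 : dist3 d (sh y n s) < e0).
      { pose proof (dist3_triangle d y (sh y n s)). rewrite dist_sh in H by exact Hn.
        rewrite Rabs_pos_eq in H by lra. lra. }
      apply (Hloc _ Hd2) in HP. rewrite dot_sh in HP by exact Hn. unfold dot in HP. lra. }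
  split; [apply Hbd; [rewrite dist3_refl; lra| exact Hd]|].
  split; [exact Hd|].
  exists (e0 / 2). split; [lra|]. intros y Hy. split; [|apply Hbd; exact Hy].
  intros [Hin Hout]. unfold in_plane.
  pose proof (dot_bound n y) as DB.
  destruct (Rtotal_order (dot n y) c) as [Hl|[Heq|Hg]].
  - exfalso. set (del := Rmin (e0/2) (c - dot n y)).
    assert (0 < del /\ del <= e0/2 /\ del <= c - dot n y) by (unfold del, Rmin; destruct Rle_dec; lra).
    destruct (Hin del ltac:(lra)) as [z [Hz Pz]].
    assert (dist3 d z < e0) by (pose proof (dist3_triangle d y z); lra).
    apply (Hloc z H0) in Pz. destruct (DB z Hn). lra.
  - unfold dot in Heq. exact Heq.
  - exfalso. set (del := Rmin (e0/2) (dot n y - c)).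
    assert (0 < del /\ del <= e0/2 /\ del <= dot n y - c) by (unfold del, Rmin; destruct Rle_dec; lra).
    destruct (Hout del ltac:(lra)) as [z [Hz Pz]].
    assert (dist3 d z < e0) by (pose proof (dist3_triangle d y z); lra).
    apply Pz. apply (Hloc z H0). destruct (DB z Hn). lra.
Qed.

Lemma closure_lerp (S : pt3 -> Prop) q x0 :
  (forall l, 0 < l <= 1 -> S (lerp q x0 l)) -> closure dist3 S q.
Proof.
  intros H e He. set (D := dist3 q x0). assert (HD : 0 <= D) by apply dist3_nonneg.
  set (l := Rmin 1 (e / (D + 1))).
  assert (Hp : 0 < e / (D + 1)) by (apply Rdiv_lt_0_compat; lra).
  assert (Hl : 0 < l <= 1 /\ l <= e / (D+1)) by (unfold l, Rmin; destruct Rle_dec; lra).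
  exists (lerp q x0 l). split; [apply H; lra|].
  rewrite <- (lerp0 q x0) at 1. rewrite dist_lerp. fold D.
  rewrite Rabs_left1 by lra.
  assert (e / (D + 1) * (D + 1) = e) by (field; lra).
  assert (l * D <= e / (D+1) * D) by (apply Rmult_le_compat_r; lra).
  assert (e / (D+1) * D < e / (D+1) * (D + 1)) by (apply Rmult_lt_compat_l; lra).
  lra.
Qed.

Lemma closure_mono (S S' : pt3 -> Prop) q :
  (forall x, S x -> S' x) -> closure dist3 S q -> closure dist3 S' q.
Proof. intros H Hc e He. destruct (Hc e He) as [z [Sz Hz]]. exists z; auto. Qed.

Lemma master (P T B : pt3 -> Prop) (n : pt3) c x0 (D : pt3 -> Prop) :
  px n ^2 + py n ^2 + pz n ^2 = 1 ->
  (forall d, D d -> in_plane n c d /\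
     exists e, 0 < e /\ forall y, dist3 d y < e -> (P y <-> dot n y >= c)) ->
  convex D -> D x0 ->
  (forall p, P p -> exists q, closure dist3 D q /\ visible P p q) ->
  ~ T x0 -> ~ B x0 ->
  exists F, closed_face P F /\ guards P F /\ ~ same_set F T /\ ~ same_set F B.
Proof.
  intros Hn HDl Hcv HD0 Hg HT HB.
  assert (Dflat : forall d, D d -> flat_pt P n c d).
  { intros d Hd. destruct (HDl d Hd) as [Hp [e [He Hl]]].
    eapply halfspace_flat; eauto. }
  assert (Dcomp : forall d, D d -> component dist3 (flat_pt P n c) x0 d).
  { intros d Hd. split; [apply Dflat; exact HD0|].
    exists D. split; [exact Dflat|]. split; [exact HD0|]. split; [exact Hd|]. apply convex_connected; exact Hcv. }
  exists (closure dist3 (component dist3 (flat_pt P n c) x0)).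
  assert (F0 : closure dist3 (component dist3 (flat_pt P n c) x0) x0).
  { intros e He. exists x0. rewrite dist3_refl. split; [apply Dcomp; exact HD0| exact He]. }
  split; [|split; [|split]].
  - exists n, c, x0. split; [|split; [apply Dflat; exact HD0| tauto]].
    intro E; rewrite E in Hn; simpl in Hn; lra.
  - intros p Pp. destruct (Hg p Pp) as [q [Hq Hv]]. exists q. split; [|exact Hv].
    eapply closure_mono; [|exact Hq]. exact Dcomp.
  - intro Hs. apply HT. apply Hs. exact F0.
  - intro Hs. apply HB. apply Hs. exact F0.
Qed.
Lemma lerp_closed a b u v s : a <= u <= b -> a <= v <= b -> 0 <= s <= 1 ->
  a <= u + s * (v - u) <= b.
Proof. intros. 
  assert (0 <= (1 - s) * (u - a)) by (apply Rmult_le_pos; lra).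
  assert (0 <= s * (v - a)) by (apply Rmult_le_pos; lra).
  assert (0 <= (1 - s) * (b - u)) by (apply Rmult_le_pos; lra).
  assert (0 <= s * (b - v)) by (apply Rmult_le_pos; lra).
  split; nra. Qed.

Lemma lerp_oc a b u v l : a <= u <= b -> a < v < b -> 0 < l <= 1 ->
  a < u + l * (v - u) < b.
Proof. intros.
  assert (0 <= (1 - l) * (u - a)) by (apply Rmult_le_pos; lra).
  assert (0 < l * (v - a)) by (apply Rmult_lt_0_compat; lra).
  assert (0 <= (1 - l) * (b - u)) by (apply Rmult_le_pos; lra).
  assert (0 < l * (b - v)) by (apply Rmult_lt_0_compat; lra).
  split; nra. Qed.

Lemma lerp_open a b u v s : a < u < b -> a < v < b -> 0 <= s <= 1 ->
  a < u + s * (v - u) < b.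
Proof. intros. destruct (Req_dec s 0) as [E|E].
  - subst. lra.
  - apply lerp_oc; lra. Qed.

Lemma min5 a b c d f : 0 < a -> 0 < b -> 0 < c -> 0 < d -> 0 < f ->
  exists e, 0 < e /\ e <= a /\ e <= b /\ e <= c /\ e <= d /\ e <= f.
Proof.
  intros. exists (Rmin a (Rmin b (Rmin c (Rmin d f)))).
  unfold Rmin; repeat destruct Rle_dec; lra.
Qed.

Definition P3lerp_ok := True.

Lemma vis_same (P : pt3 -> Prop) Q zlo zhi p q :
  (forall x, brick Q zlo zhi x -> P x) ->
  brick Q zlo zhi p -> brick Q zlo zhi q -> visible P p q.
Proof.
  intros HP Hp Hq s Hs. apply HP. unfold brick, in_rect in *; cbn [fst snd px py pz] in *.
  destruct Hp as [[A B] C]. destruct Hq as [[A' B'] C'].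
  split; [split|]; apply lerp_closed; auto.
Qed.

Lemma vis_down (P : pt3 -> Prop) Qa Qb za zb zc p q :
  (forall w, in_rect Qa w -> in_rect Qb w) ->
  (forall x, brick Qa zb zc x -> P x) -> (forall x, brick Qb za zb x -> P x) ->
  in_rect Qa (px p, py p) -> zb <= pz p <= zc ->
  in_rect Qa (px q, py q) -> za <= pz q <= zb -> visible P p q.
Proof.
  intros Hab Ha Hb Hp Hpz Hq Hqz s Hs. change (P (lerp p q s)).
  assert (Hxy : in_rect Qa (px (lerp p q s), py (lerp p q s))).
  { unfold in_rect in *; cbn [fst snd px py pz lerp] in *.
    destruct Hp as [A B]; destruct Hq as [A' B']. split; apply lerp_closed; auto. }
  assert (Hz : za <= pz (lerp p q s) <= zc) by (cbn [pz lerp]; apply lerp_closed; lra).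
  destruct (Rle_dec zb (pz (lerp p q s))) as [h|h].
  - apply Ha. split; [exact Hxy|]. split; lra.
  - apply Hb. split; [apply Hab; exact Hxy|]. split; lra.
Qed.

Lemma vis_up (P : pt3 -> Prop) Qa Qb za zb zc p q :
  (forall w, in_rect Qa w -> in_rect Qb w) ->
  (forall x, brick Qa za zb x -> P x) -> (forall x, brick Qb zb zc x -> P x) ->
  in_rect Qa (px p, py p) -> za <= pz p <= zb ->
  in_rect Qa (px q, py q) -> zb <= pz q <= zc -> visible P p q.
Proof.
  intros Hab Ha Hb Hp Hpz Hq Hqz s Hs. change (P (lerp p q s)).
  assert (Hxy : in_rect Qa (px (lerp p q s), py (lerp p q s))).
  { unfold in_rect in *; cbn [fst snd px py pz lerp] in *.
    destruct Hp as [A B]; destruct Hq as [A' B']. split; apply lerp_closed; auto. }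
  assert (Hz : za <= pz (lerp p q s) <= zc) by (cbn [pz lerp]; apply lerp_closed; lra).
  destruct (Rle_dec (pz (lerp p q s)) zb) as [h|h].
  - apply Ha. split; [exact Hxy|]. split; lra.
  - apply Hb. split; [apply Hab; exact Hxy|]. split; lra.
Qed.

Definition incl (A B : rect) : Prop :=
  rx1 B <= rx1 A /\ rx2 A <= rx2 B /\ ry1 B <= ry1 A /\ ry2 A <= ry2 B.

Lemma incl_in A B w : incl A B -> in_rect A w -> in_rect B w.
Proof. unfold incl, in_rect. intros. lra. Qed.

Section S.
Variables (R1 R2 R3 : rect) (z0 z1 z2 z3 : R).
Let P := stack3 R1 R2 R3 z0 z1 z2 z3.
Lemma B1P x : brick R1 z0 z1 x -> P x. Proof. unfold P, stack3; tauto. Qed.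
Lemma B2P x : brick R2 z1 z2 x -> P x. Proof. unfold P, stack3; tauto. Qed.
Lemma B3P x : brick R3 z2 z3 x -> P x. Proof. unfold P, stack3; tauto. Qed.
End S.

Ltac locproof :=
  intros y Hy; 
  destruct (coord_bound _ _ _ Hy) as [[?X1 ?X2] [[?Y1 ?Y2] [?Z1 ?Z2]]];
  unfold stack3, brick, in_rect, dot; cbn [fst snd px py pz]; split;
  [ let H := fresh in intro H; decompose [and or] H; lra
  | intro; right; left; repeat split; lra ].

Ltac vis_tac := idtac.
Definition Concl R1 R2 R3 z0 z1 z2 z3 : Prop :=
  exists F : pt3 -> Prop,
      closed_face (stack3 R1 R2 R3 z0 z1 z2 z3) F /\
      guards (stack3 R1 R2 R3 z0 z1 z2 z3) F /\
      ~ same_set F (hface R3 z3) /\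
      ~ same_set F (hface R1 z0).

Ltac mkeps a b c d f :=
  let e := fresh "e" in let He := fresh "He" in
  destruct (min5 a b c d f) as [e [He [?E1 [?E2 [?E3 [?E4 ?E5]]]]]]; try lra;
  exists e; split; [exact He|].

Lemma strip1 R1 R2 R3 z0 z1 z2 z3 :
  valid_rect R1 -> valid_rect R2 -> valid_rect R3 -> z0 < z1 -> z1 < z2 -> z2 < z3 ->
  incl R1 R2 -> incl R3 R2 -> rx1 R2 < rx1 R1 -> rx1 R3 <= rx1 R1 ->
  Concl R1 R2 R3 z0 z1 z2 z3.
Proof.
  intros V1 V2 V3 Z1 Z2 Z3 I1 I3 Ha Hb. unfold valid_rect, incl in *.
  set (X0 := P3 ((rx1 R2 + rx1 R1)/2) ((ry1 R2 + ry2 R2)/2) z1).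
  apply (master (stack3 R1 R2 R3 z0 z1 z2 z3) (hface R3 z3) (hface R1 z0)
    (P3 0 0 1) z1 X0
    (fun d => rx1 R2 < px d < rx1 R1 /\ ry1 R2 < py d < ry2 R2 /\ pz d = z1)).
  - cbn; ring.
  - intros d [H1 [H2 H3]]. split; [unfold in_plane; cbn [px py pz]; lra|].
    mkeps (px d - rx1 R2) (rx1 R1 - px d) (py d - ry1 R2) (ry2 R2 - py d) (z2 - z1).
    locproof.
  - intros x y s [A1 [A2 A3]] [B1' [B2' B3']] Hs. cbn [lerp px py pz].
    split; [apply lerp_open; auto|]. split; [apply lerp_open; auto|]. rewrite A3, B3'; ring.
  - unfold X0; cbn [px py pz]; lra.
  - intros p Hp. destruct Hp as [Hp|[Hp|Hp]].
    + exists (P3 (rx1 R1) (ry1 R1) z1). split.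
      * apply closure_lerp with X0. intros l Hl. unfold X0; cbn [lerp px py pz].
        split; [apply lerp_oc; lra|]. split; [apply lerp_oc; lra|]. ring.
      * apply vis_same with R1 z0 z1; [apply B1P|exact Hp|].
        unfold brick, in_rect; cbn [fst snd px py pz]; lra.
    + exists (P3 (rx1 R1) (ry1 R1) z1). split.
      * apply closure_lerp with X0. intros l Hl. unfold X0; cbn [lerp px py pz].
        split; [apply lerp_oc; lra|]. split; [apply lerp_oc; lra|]. ring.
      * apply vis_same with R2 z1 z2; [apply B2P|exact Hp|].
        unfold brick, in_rect; cbn [fst snd px py pz]; lra.
    + exists (P3 (rx1 R3) (ry1 R3) z1). split.
      * apply closure_lerp with X0. intros l Hl. unfold X0; cbn [lerp px py pz].
        split; [apply lerp_oc; lra|]. split; [apply lerp_oc; lra|]. ring.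
      * destruct Hp as [Hp Hpz].
        apply (vis_down _ R3 R2 z1 z2 z3); auto.
        -- intros w; apply incl_in; unfold incl; lra.
        -- apply B3P.
        -- apply B2P.
        -- unfold in_rect; cbn [fst snd px py pz]; lra.
        -- cbn; lra.
  - unfold hface, X0; cbn [px py pz]; lra.
  - unfold hface, X0; cbn [px py pz]; lra.
Qed.
Lemma strip2 R1 R2 R3 z0 z1 z2 z3 :
  valid_rect R1 -> valid_rect R2 -> valid_rect R3 -> z0 < z1 -> z1 < z2 -> z2 < z3 ->
  incl R1 R2 -> incl R3 R2 -> rx1 R2 < rx1 R3 -> rx1 R1 <= rx1 R3 ->
  Concl R1 R2 R3 z0 z1 z2 z3.
Proof.
  intros V1 V2 V3 Z1 Z2 Z3 I1 I3 Ha Hb. unfold valid_rect, incl in *.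
  set (X0 := P3 ((rx1 R2 + rx1 R3)/2) ((ry1 R2 + ry2 R2)/2) z2).
  apply (master (stack3 R1 R2 R3 z0 z1 z2 z3) (hface R3 z3) (hface R1 z0)
    (P3 0 0 (-1)) (- z2) X0
    (fun d => rx1 R2 < px d < rx1 R3 /\ ry1 R2 < py d < ry2 R2 /\ pz d = z2)).
  - cbn; ring.
  - intros d [H1 [H2 H3]]. split; [unfold in_plane; cbn [px py pz]; lra|].
    mkeps (px d - rx1 R2) (rx1 R3 - px d) (py d - ry1 R2) (ry2 R2 - py d) (z2 - z1).
    locproof.
  - intros x y s [A1 [A2 A3]] [B1' [B2' B3']] Hs. cbn [lerp px py pz].
    split; [apply lerp_open; auto|]. split; [apply lerp_open; auto|]. rewrite A3, B3'; ring.
  - unfold X0; cbn [px py pz]; lra.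
  - intros p Hp. destruct Hp as [Hp|[Hp|Hp]].
    + exists (P3 (rx1 R1) (ry1 R1) z2). split.
      * apply closure_lerp with X0. intros l Hl. unfold X0; cbn [lerp px py pz].
        split; [apply lerp_oc; lra|]. split; [apply lerp_oc; lra|]. ring.
      * destruct Hp as [Hp Hpz].
        apply (vis_up _ R1 R2 z0 z1 z2); auto.
        -- intros w; apply incl_in; unfold incl; lra.
        -- apply B1P.
        -- apply B2P.
        -- unfold in_rect; cbn [fst snd px py pz]; lra.
        -- cbn; lra.
    + exists (P3 (rx1 R3) (ry1 R3) z2). split.
      * apply closure_lerp with X0. intros l Hl. unfold X0; cbn [lerp px py pz].
        split; [apply lerp_oc; lra|]. split; [apply lerp_oc; lra|]. ring.
      * apply vis_same with R2 z1 z2; [apply B2P|exact Hp|].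
        unfold brick, in_rect; cbn [fst snd px py pz]; lra.
    + exists (P3 (rx1 R3) (ry1 R3) z2). split.
      * apply closure_lerp with X0. intros l Hl. unfold X0; cbn [lerp px py pz].
        split; [apply lerp_oc; lra|]. split; [apply lerp_oc; lra|]. ring.
      * apply vis_same with R3 z2 z3; [apply B3P|exact Hp|].
        unfold brick, in_rect; cbn [fst snd px py pz]; lra.
  - unfold hface, X0; cbn [px py pz]; lra.
  - unfold hface, X0; cbn [px py pz]; lra.
Qed.

Ltac side_guards X0 u1 v1 u3 v3 R1 R2 R3 z0 z1 z2 z3 :=
  intros p Hp; destruct Hp as [Hp|[Hp|Hp]];
  [ exists (P3 u1 v1 z1); split;
    [ apply closure_lerp with X0; intros l Hl; unfold X0; cbn [lerp px py pz];
      repeat first [ring | (apply lerp_oc; lra) | split]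
    | apply vis_same with R1 z0 z1; [apply B1P|exact Hp|];
      unfold brick, in_rect; cbn [fst snd px py pz]; lra ]
  | exists (P3 u1 v1 z1); split;
    [ apply closure_lerp with X0; intros l Hl; unfold X0; cbn [lerp px py pz];
      repeat first [ring | (apply lerp_oc; lra) | split]
    | apply vis_same with R2 z1 z2; [apply B2P|exact Hp|];
      unfold brick, in_rect; cbn [fst snd px py pz]; lra ]
  | exists (P3 u3 v3 z2); split;
    [ apply closure_lerp with X0; intros l Hl; unfold X0; cbn [lerp px py pz];
      repeat first [ring | (apply lerp_oc; lra) | split]
    | apply vis_same with R3 z2 z3; [apply B3P|exact Hp|];
      unfold brick, in_rect; cbn [fst snd px py pz]; lra ] ].

Lemma side0 R1 R2 R3 z0 z1 z2 z3 u1 v1 u3 v3 :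
  valid_rect R2 -> z0 < z1 -> z1 < z2 -> z2 < z3 ->
  side R2 0 (u1, v1) -> in_rect R1 (u1, v1) -> side R2 0 (u3, v3) -> in_rect R3 (u3, v3) ->
  Concl R1 R2 R3 z0 z1 z2 z3.
Proof.
  intros V2 Z1 Z2 Z3 S1 I1 S3 I3. unfold valid_rect, side, in_rect in *; cbn [fst snd] in *.
  destruct S1 as [-> S1]. destruct S3 as [-> S3].
  set (X0 := P3 (rx1 R2) ((ry1 R2 + ry2 R2)/2) ((z1 + z2)/2)).
  apply (master (stack3 R1 R2 R3 z0 z1 z2 z3) (hface R3 z3) (hface R1 z0)
    (P3 1 0 0) (rx1 R2) X0
    (fun d => px d = rx1 R2 /\ ry1 R2 < py d < ry2 R2 /\ z1 < pz d < z2)).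
  - cbn; ring.
  - intros d [H1 [H2 H3]]. split; [unfold in_plane; cbn [px py pz]; lra|].
    mkeps (py d - ry1 R2) (ry2 R2 - py d) (pz d - z1) (z2 - pz d) (rx2 R2 - rx1 R2).
    locproof.
  - intros x y s [A1 [A2 A3]] [B1' [B2' B3']] Hs. cbn [lerp px py pz].
    split; [rewrite A1, B1'; ring|]. split; apply lerp_open; auto.
  - unfold X0; cbn [px py pz]; lra.
  - side_guards X0 (rx1 R2) v1 (rx1 R2) v3 R1 R2 R3 z0 z1 z2 z3.
  - unfold hface, X0; cbn [px py pz]; lra.
  - unfold hface, X0; cbn [px py pz]; lra.
Qed.
Lemma side1 R1 R2 R3 z0 z1 z2 z3 u1 v1 u3 v3 :
  valid_rect R2 -> z0 < z1 -> z1 < z2 -> z2 < z3 ->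
  side R2 1 (u1, v1) -> in_rect R1 (u1, v1) -> side R2 1 (u3, v3) -> in_rect R3 (u3, v3) ->
  Concl R1 R2 R3 z0 z1 z2 z3.
Proof.
  intros V2 Z1 Z2 Z3 S1 I1 S3 I3. unfold valid_rect, side, in_rect in *; cbn [fst snd] in *.
  destruct S1 as [-> S1]. destruct S3 as [-> S3].
  set (X0 := P3 (rx2 R2) ((ry1 R2 + ry2 R2)/2) ((z1 + z2)/2)).
  apply (master (stack3 R1 R2 R3 z0 z1 z2 z3) (hface R3 z3) (hface R1 z0)
    (P3 (-1) 0 0) (- rx2 R2) X0
    (fun d => px d = rx2 R2 /\ ry1 R2 < py d < ry2 R2 /\ z1 < pz d < z2)).
  - cbn; ring.
  - intros d [H1 [H2 H3]]. split; [unfold in_plane; cbn [px py pz]; lra|].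
    mkeps (py d - ry1 R2) (ry2 R2 - py d) (pz d - z1) (z2 - pz d) (rx2 R2 - rx1 R2).
    locproof.
  - intros x y s [A1 [A2 A3]] [B1' [B2' B3']] Hs. cbn [lerp px py pz].
    split; [rewrite A1, B1'; ring|]. split; apply lerp_open; auto.
  - unfold X0; cbn [px py pz]; lra.
  - side_guards X0 (rx2 R2) v1 (rx2 R2) v3 R1 R2 R3 z0 z1 z2 z3.
  - unfold hface, X0; cbn [px py pz]; lra.
  - unfold hface, X0; cbn [px py pz]; lra.
Qed.

Lemma side2 R1 R2 R3 z0 z1 z2 z3 u1 v1 u3 v3 :
  valid_rect R2 -> z0 < z1 -> z1 < z2 -> z2 < z3 ->
  side R2 2 (u1, v1) -> in_rect R1 (u1, v1) -> side R2 2 (u3, v3) -> in_rect R3 (u3, v3) ->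
  Concl R1 R2 R3 z0 z1 z2 z3.
Proof.
  intros V2 Z1 Z2 Z3 S1 I1 S3 I3. unfold valid_rect, side, in_rect in *; cbn [fst snd] in *.
  destruct S1 as [-> S1]. destruct S3 as [-> S3].
  set (X0 := P3 ((rx1 R2 + rx2 R2)/2) (ry1 R2) ((z1 + z2)/2)).
  apply (master (stack3 R1 R2 R3 z0 z1 z2 z3) (hface R3 z3) (hface R1 z0)
    (P3 0 1 0) (ry1 R2) X0
    (fun d => rx1 R2 < px d < rx2 R2 /\ py d = ry1 R2 /\ z1 < pz d < z2)).
  - cbn; ring.
  - intros d [H1 [H2 H3]]. split; [unfold in_plane; cbn [px py pz]; lra|].
    mkeps (px d - rx1 R2) (rx2 R2 - px d) (pz d - z1) (z2 - pz d) (ry2 R2 - ry1 R2).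
    locproof.
  - intros x y s [A1 [A2 A3]] [B1' [B2' B3']] Hs. cbn [lerp px py pz].
    split; [apply lerp_open; auto|]. split; [rewrite A2, B2'; ring|]. apply lerp_open; auto.
  - unfold X0; cbn [px py pz]; lra.
  - side_guards X0 u1 (ry1 R2) u3 (ry1 R2) R1 R2 R3 z0 z1 z2 z3.
  - unfold hface, X0; cbn [px py pz]; lra.
  - unfold hface, X0; cbn [px py pz]; lra.
Qed.

Lemma side3 R1 R2 R3 z0 z1 z2 z3 u1 v1 u3 v3 :
  valid_rect R2 -> z0 < z1 -> z1 < z2 -> z2 < z3 ->
  side R2 3 (u1, v1) -> in_rect R1 (u1, v1) -> side R2 3 (u3, v3) -> in_rect R3 (u3, v3) ->
  Concl R1 R2 R3 z0 z1 z2 z3.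
Proof.
  intros V2 Z1 Z2 Z3 S1 I1 S3 I3. unfold valid_rect, side, in_rect in *; cbn [fst snd] in *.
  destruct S1 as [-> S1]. destruct S3 as [-> S3].
  set (X0 := P3 ((rx1 R2 + rx2 R2)/2) (ry2 R2) ((z1 + z2)/2)).
  apply (master (stack3 R1 R2 R3 z0 z1 z2 z3) (hface R3 z3) (hface R1 z0)
    (P3 0 (-1) 0) (- ry2 R2) X0
    (fun d => rx1 R2 < px d < rx2 R2 /\ py d = ry2 R2 /\ z1 < pz d < z2)).
  - cbn; ring.
  - intros d [H1 [H2 H3]]. split; [unfold in_plane; cbn [px py pz]; lra|].
    mkeps (px d - rx1 R2) (rx2 R2 - px d) (pz d - z1) (z2 - pz d) (ry2 R2 - ry1 R2).
    locproof.
  - intros x y s [A1 [A2 A3]] [B1' [B2' B3']] Hs. cbn [lerp px py pz].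
    split; [apply lerp_open; auto|]. split; [rewrite A2, B2'; ring|]. apply lerp_open; auto.
  - unfold X0; cbn [px py pz]; lra.
  - side_guards X0 u1 (ry2 R2) u3 (ry2 R2) R1 R2 R3 z0 z1 z2 z3.
  - unfold hface, X0; cbn [px py pz]; lra.
  - unfold hface, X0; cbn [px py pz]; lra.
Qed.
Lemma strict_incl A B : valid_rect A -> strict_sub A B -> incl A B.
Proof.
  intros VA [Hs _]. unfold valid_rect, incl, subset2, in_rect in *.
  pose proof (Hs (rx1 A, ry1 A)) as H1. pose proof (Hs (rx2 A, ry2 A)) as H2.
  cbn [fst snd] in *. destruct VA.
  assert (X1 : (rx1 A <= rx1 A <= rx2 A) /\ (ry1 A <= ry1 A <= ry2 A)) by lra.
  assert (X2 : (rx1 A <= rx2 A <= rx2 A) /\ (ry1 A <= ry2 A <= ry2 A)) by lra.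
  specialize (H1 X1); specialize (H2 X2). lra.
Qed.

Lemma canon_cases A B : canonical A B -> strict_sub A B \/ strict_sub B A.
Proof. intros [[H _]|[H _]]; auto. Qed.

Lemma exists_type s b : exists i, contact_type s b i.
Proof.
  set (f := fun k => if excluded_middle_informative (~ subset2 (side s k) (rect_bd b)) then true else false).
  exists (b2n (f 0%nat) + b2n (f 1%nat) + b2n (f 2%nat) + b2n (f 3%nat))%nat.
  exists f. split; [|reflexivity].
  intros k _. unfold f. destruct excluded_middle_informative; split; intros; auto; try discriminate; contradiction.
Qed.

Lemma not4 s b : ~ contact_type s b 4 -> exists k, (k < 4)%nat /\ subset2 (side s k) (rect_bd b).
Proof.
  intro H. apply NNPP. intro Hn. apply H. exists (fun _ => true). split; [|reflexivity].
  intros k Hk. split; [|reflexivity]. intros _ Hs. apply Hn. exists k; auto.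
Qed.

Lemma share s b k : valid_rect s -> incl s b -> (k < 4)%nat -> subset2 (side s k) (rect_bd b) ->
  rx1 s = rx1 b \/ rx2 s = rx2 b \/ ry1 s = ry1 b \/ ry2 s = ry2 b.
Proof.
  intros Vs I Hk Hsub. unfold valid_rect, incl in *.
  destruct k as [|[|[|[|k]]]]; [| | | |exfalso; lia].
  - specialize (Hsub (rx1 s, (ry1 s + ry2 s)/2)).
    unfold rect_bd, side in Hsub; cbn [fst snd] in Hsub.
    assert (HH : rx1 s = rx1 s /\ ry1 s <= (ry1 s + ry2 s)/2 <= ry2 s) by lra.
    specialize (Hsub HH). decompose [and or] Hsub; lra.
  - specialize (Hsub (rx2 s, (ry1 s + ry2 s)/2)).
    unfold rect_bd, side in Hsub; cbn [fst snd] in Hsub.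
    assert (HH : rx2 s = rx2 s /\ ry1 s <= (ry1 s + ry2 s)/2 <= ry2 s) by lra.
    specialize (Hsub HH). decompose [and or] Hsub; lra.
  - specialize (Hsub ((rx1 s + rx2 s)/2, ry1 s)).
    unfold rect_bd, side in Hsub; cbn [fst snd] in Hsub.
    assert (HH : ry1 s = ry1 s /\ rx1 s <= (rx1 s + rx2 s)/2 <= rx2 s) by lra.
    specialize (Hsub HH). decompose [and or] Hsub; lra.
  - specialize (Hsub ((rx1 s + rx2 s)/2, ry2 s)).
    unfold rect_bd, side in Hsub; cbn [fst snd] in Hsub.
    assert (HH : ry2 s = ry2 s /\ rx1 s <= (rx1 s + rx2 s)/2 <= rx2 s) by lra.
    specialize (Hsub HH). decompose [and or] Hsub; lra.
Qed.

Ltac sd := unfold side, in_rect; cbn [fst snd]; lra.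

Theorem mainTheorem10 :
  forall (R1 R2 R3 : rect) (z0 z1 z2 z3 : R),
    valid_rect R1 -> valid_rect R2 -> valid_rect R3 ->
    z0 < z1 -> z1 < z2 -> z2 < z3 ->
    canonical R1 R2 -> canonical R2 R3 ->
    (* signature is not of the form  cap_i cap_4 *)
    ~ (exists i, is_cap R1 R2 i /\ is_cap R2 R3 4) ->
    (* signature is not of the form  cup_4 cup_i *)
    ~ (exists i, is_cup R1 R2 4 /\ is_cup R2 R3 i) ->
    exists F : pt3 -> Prop,
      closed_face (stack3 R1 R2 R3 z0 z1 z2 z3) F /\
      guards (stack3 R1 R2 R3 z0 z1 z2 z3) F /\
      ~ same_set F (hface R3 z3) /\
      ~ same_set F (hface R1 z0).
Proof.
  intros R1 R2 R3 z0 z1 z2 z3 V1 V2 V3 Z1 Z2 Z3 C12 C23 Ncap Ncup.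
  change (Concl R1 R2 R3 z0 z1 z2 z3).
  destruct (canon_cases _ _ C12) as [S12|S21]; destruct (canon_cases _ _ C23) as [S23|S32].
  -
    assert (N : ~ contact_type R1 R2 4).
    { intro H. destruct (exists_type R2 R3) as [i Hi]. apply Ncup. exists i.
      split; split; auto. }
    destruct (not4 _ _ N) as [k [Hk Hs]].
    pose proof (strict_incl _ _ V1 S12) as I12. pose proof (strict_incl _ _ V2 S23) as I23.
    pose proof (share _ _ _ V1 I12 Hk Hs) as Sh.
    unfold valid_rect, incl in *.
    destruct Sh as [E|[E|[E|E]]].
    + apply (side0 _ _ _ _ _ _ _ (rx1 R1) (ry1 R1) (rx1 R2) (ry1 R2)); auto; sd.
    + apply (side1 _ _ _ _ _ _ _ (rx2 R1) (ry1 R1) (rx2 R2) (ry1 R2)); auto; sd.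
    + apply (side2 _ _ _ _ _ _ _ (rx1 R1) (ry1 R1) (rx1 R2) (ry1 R2)); auto; sd.
    + apply (side3 _ _ _ _ _ _ _ (rx1 R1) (ry2 R1) (rx1 R2) (ry2 R2)); auto; sd.
  -
    pose proof (strict_incl _ _ V1 S12) as I12. pose proof (strict_incl _ _ V3 S32) as I32.
    destruct (Rle_lt_dec (rx1 R3) (rx1 R1)) as [h|h].
    + destruct (Rlt_le_dec (rx1 R2) (rx1 R1)) as [h2|h2].
      * apply strip1; auto.
      * unfold valid_rect, incl in *.
        apply (side0 _ _ _ _ _ _ _ (rx1 R1) (ry1 R1) (rx1 R3) (ry1 R3)); auto; sd.
    + apply strip2; auto; unfold incl in *; lra.
  -
    pose proof (strict_incl _ _ V2 S21) as I21. pose proof (strict_incl _ _ V2 S23) as I23.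
    unfold valid_rect, incl in *.
    apply (side0 _ _ _ _ _ _ _ (rx1 R2) (ry1 R2) (rx1 R2) (ry1 R2)); auto; sd.
  -
    assert (N : ~ contact_type R3 R2 4).
    { intro H. destruct (exists_type R2 R1) as [i Hi]. apply Ncap. exists i.
      split; split; auto. }
    destruct (not4 _ _ N) as [k [Hk Hs]].
    pose proof (strict_incl _ _ V2 S21) as I21. pose proof (strict_incl _ _ V3 S32) as I32.
    pose proof (share _ _ _ V3 I32 Hk Hs) as Sh.
    unfold valid_rect, incl in *.
    destruct Sh as [E|[E|[E|E]]].
    + apply (side0 _ _ _ _ _ _ _ (rx1 R2) (ry1 R2) (rx1 R3) (ry1 R3)); auto; sd.
    + apply (side1 _ _ _ _ _ _ _ (rx2 R2) (ry1 R2) (rx2 R3) (ry1 R3)); auto; sd.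
    + apply (side2 _ _ _ _ _ _ _ (rx1 R2) (ry1 R2) (rx1 R3) (ry1 R3)); auto; sd.
    + apply (side3 _ _ _ _ _ _ _ (rx1 R2) (ry2 R2) (rx1 R3) (ry2 R3)); auto; sd.
Qed.
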